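(* Let $h$ be a positive integer and let $0<\beta<1$ be a real. There is a positive real $\alpha$ depending on $h$ and $\beta$ such that the following holds. Let $G$ be any graph on $n$ vertices and let $p=\frac{2e(G)}{n^2}$. For $i,j\in[h]$ let $\mathcal{A}_{i,j}$ denote the set of $i$-good sequences of length $j$ relative to $(\alpha,\beta,h,1)$ in $V(G)$. Then for all $i,j\in[h]$, \[\sum_{S\in\mathcal{A}_{i,j}}|N(S)|\geq(1-\beta)\,n^{j+1}p^j.\] In particular, there exists an $i$-good sequence $S$ of length $j$ such that $|N(S)|\ge(1-\beta)p^j n$.
   Context: All graphs are finite and simple. A sequence in a set $W$ is a finite sequence of elements of $W$ (repetitions allowed); its length $|S|$ counts multiplicity; $W^k$ denotes the set of sequences of length $k$ in $W$. For a sequence $S$ in $V(G)$, $N(S)$ is the set of vertices adjacent to every vertex of $S$. Goodness relative to $(\alpha,\beta,h,1)$, with $p=2e(G)/n^2$: a sequence $T$ in $V(G)$ is $0$-good if $|N(T)|\ge\alpha p^{|T|}n$; for $1\le i\le h$, a sequence $S$ in $V(G)$ of length at most $h$ is $i$-good if $S$ is $0$-good and for each $|S|\le k\le h$, the number of $(i-1)$-good sequences in $N(S)^k$ is at least $(1-\beta)|N(S)|^k$. *)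

(* Defs.v *)
From HB Require Import structures.
From mathcomp Require Import all_boot all_order all_algebra.
From mathcomp Require Import reals.
Set Implicit Arguments. Unset Strict Implicit. Unset Printing Implicit Defensive.
Import Order.TTheory GRing.Theory Num.Theory.
Local Open Scope ring_scope.

Section Goodness.
Variables (T : finType) (G : rel T).

Definition edges : {set {set T}} :=
  [set A : {set T} | [exists x, exists y, G x y && (A == [set x; y])]].

Definition nedges : nat := #|edges|.

Definition nbhd (S : seq T) : {set T} := [set v | all (fun u => G u v) S].

Variable R : realType.

Definition density : R := (2 * nedges)%:R / (#|T| ^ 2)%:R.

Variables (alpha beta : R) (h : nat).

Definition good0 (S : seq T) : bool :=
  alpha * density ^+ size S * #|T|%:R <= #|nbhd S|%:R.

Fixpoint good (i : nat) (S : seq T) {struct i} : bool :=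
  match i with
  | 0 => good0 S
  | i'.+1 =>
      [&& (size S <= h)%N,
          good0 S &
          [forall k : 'I_h.+1,
             (size S <= k)%N ==>
             ((1 - beta) * (#|nbhd S| ^ k)%:R
                <= #|[set t : k.-tuple T | all (fun u => u \in nbhd S) t
                                           && good i' t]|%:R)]]
  end.

End Goodness.

(* Main.v *)
Require Import Defs.
From HB Require Import structures.
From mathcomp Require Import all_boot all_order all_algebra.
From mathcomp Require Import reals ring lra zify.
Set Implicit Arguments. Unset Strict Implicit. Unset Printing Implicit Defensive.
Import Order.TTheory GRing.Theory Num.Theory.
Local Open Scope ring_scope.

Lemma card_tuples_in (T : finType) (A : {set T}) k :
  #|[set t : k.-tuple T | all (fun u => u \in A) t]| = (#|A| ^ k)%N.
Proof.
pose f (t : k.-tuple T) : {ffun 'I_k -> T} := [ffun i => tnth t i].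
have finj : injective f.
  move=> t1 t2 /ffunP E; apply: eq_from_tnth => i; have := E i; rewrite !ffunE.
  by [].
rewrite -(card_imset _ finj) -[in RHS](card_ord k) -card_ffun_on.
apply: eq_card => g; apply/imsetP/idP.
- move=> [t]; rewrite inE => /allP Ht ->; apply/ffun_onP => i.
  by rewrite ffunE; apply: Ht; apply: mem_tnth.
- move/ffun_onP => Hg; exists [tuple g i | i < k].
    rewrite inE; apply/allP => x /mapP [i _ ->]; exact: Hg.
  by apply/ffunP => i; rewrite !ffunE tnth_mktuple.
Qed.

Section Comb.
Variables (T : finType) (G : rel T).
Hypothesis Gsym : symmetric G.

Lemma adj_sym (S t : seq T) :
  all (fun u => u \in nbhd G S) t = all (fun v => v \in nbhd G t) S.
Proof.
apply/allP/allP => H x xin; rewrite inE; apply/allP => y yin.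
- by have := H y yin; rewrite inE => /allP/(_ x xin); rewrite Gsym.
- by have := H y yin; rewrite inE => /allP/(_ x xin); rewrite Gsym.
Qed.

Lemma double_count j k (P : pred (k.-tuple T)) :
  (\sum_(S : j.-tuple T)
     #|[set t : k.-tuple T | all (fun u => u \in nbhd G S) t && P t]|
  = \sum_(t : k.-tuple T | P t) #|nbhd G t| ^ j)%N.
Proof.
transitivity (\sum_(S : j.-tuple T) \sum_(t : k.-tuple T)
   ((all (fun u => u \in nbhd G S) t && P t) : nat))%N.
  apply: eq_bigr => S _; rewrite -sum1_card big_mkcond /=.
  by apply: eq_bigr => t _; rewrite inE; case: (_ && _).
rewrite exchange_big /= [RHS]big_mkcond /=; apply: eq_bigr => t _.
case: (P t) => /=; last by rewrite big1 // => S _; rewrite andbF.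
rewrite -(card_tuples_in (nbhd G t) j) -sum1_card [RHS]big_mkcond /=.
by apply: eq_bigr => S _; rewrite inE andbT adj_sym; case: all.
Qed.

Lemma sum_nbhd j :
  (\sum_(S : j.-tuple T) #|nbhd G S| = \sum_(v : T) #|nbhd G [:: v]| ^ j)%N.
Proof.
transitivity (\sum_(S : j.-tuple T) \sum_(v : T) ((v \in nbhd G S) : nat))%N.
  by apply: eq_bigr => S _; rewrite -sum1_card big_mkcond.
rewrite exchange_big /=; apply: eq_bigr => v _.
rewrite -(card_tuples_in (nbhd G [:: v]) j) -sum1_card [RHS]big_mkcond /=.
apply: eq_bigr => S _; rewrite !inE; congr (nat_of_bool _).
by apply: eq_all => u; rewrite inE /= andbT Gsym.
Qed.
End Comb.

Lemma cheb (R : realFieldType) (I : finType) (x : I -> R) q :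
  (forall i, 0 <= x i) ->
  (\sum_i x i ^+ q) * (\sum_i x i) <= #|I|%:R * \sum_i x i ^+ q.+1.
Proof.
move=> x0.
have H : 0 <= \sum_u \sum_v (x u ^+ q - x v ^+ q) * (x u - x v).
  apply: sumr_ge0 => u _; apply: sumr_ge0 => v _.
  case/orP: (le_total (x u) (x v)) => hle.
    apply: mulr_le0; rewrite subr_le0 //.
    by apply: (lerXn2r q); rewrite ?nnegrE ?x0.
  apply: mulr_ge0; rewrite subr_ge0 //.
  by apply: (lerXn2r q); rewrite ?nnegrE ?x0.
have E : \sum_u \sum_v (x u ^+ q - x v ^+ q) * (x u - x v) =
   2 * (#|I|%:R * \sum_i x i ^+ q.+1 - (\sum_i x i ^+ q) * (\sum_i x i)).
  have E1 : forall u v, (x u ^+ q - x v ^+ q) * (x u - x v) =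
     (x u ^+ q.+1 - x u ^+ q * x v) + (x v ^+ q.+1 - x v ^+ q * x u).
    by move=> u v; rewrite !exprS; ring.
  have E2 : \sum_u \sum_v (x u ^+ q.+1 - x u ^+ q * x v) =
      #|I|%:R * \sum_i x i ^+ q.+1 - (\sum_i x i ^+ q) * (\sum_i x i).
    under eq_bigr do rewrite sumrB sumr_const -mulr_sumr.
    rewrite sumrB mulr_suml sumrMnl; congr (_ - _); first by rewrite mulr_natl.
  under eq_bigr do under eq_bigr do rewrite E1.
  under eq_bigr do rewrite big_split /=.
  rewrite big_split /= [X in _ + X]exchange_big /= E2; ring.
rewrite E in H; rewrite -subr_ge0; move: H; rewrite pmulr_rge0 //.
Qed.

Lemma power_mean (R : realFieldType) (I : finType) (x : I -> R) q :
  (forall i, 0 <= x i) ->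
  (\sum_i x i) ^+ q.+1 <= #|I|%:R ^+ q * \sum_i x i ^+ q.+1.
Proof.
move=> x0; elim: q => [|q IH]; first by rewrite expr0 mul1r.
have s0 : 0 <= \sum_i x i by apply: sumr_ge0.
rewrite exprS [#|I|%:R ^+ _]exprS -mulrA.
apply: (le_trans (y := (\sum_i x i) * (#|I|%:R ^+ q * \sum_i x i ^+ q.+1))).
  by apply: ler_wpM2l.
rewrite mulrCA [X in _ <= X]mulrCA; apply: ler_wpM2l; first by rewrite exprn_ge0.
by rewrite mulrC; apply: cheb.
Qed.

Section Edges.
Variables (T : finType) (G : rel T).
Hypothesis Gsym : symmetric G.
Hypothesis Girr : irreflexive G.

Lemma sum_deg : (2 * nedges G <= \sum_(v : T) #|nbhd G [:: v]|)%N.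
Proof.
have -> : (\sum_(v : T) #|nbhd G [:: v]| = \sum_(z : T * T | G z.1 z.2) 1)%N.
  transitivity (\sum_(v : T) \sum_(u : T) (G v u : nat))%N.
    apply: eq_bigr => v _; rewrite -sum1_card big_mkcond /=.
    by apply: eq_bigr => u _; rewrite !inE /=; case: (G v u).
  rewrite pair_big /= [RHS]big_mkcond /=.
  by apply: eq_bigr => z _; case: (G z.1 z.2).
rewrite (partition_big (fun z : T * T => [set z.1; z.2]) (mem (edges G))) /=; last first.
  by move=> [x y] /= Gxy; rewrite /edges inE; apply/existsP; exists x; apply/existsP; exists y; rewrite Gxy eqxx.
rewrite /nedges -sum1_card big_distrr /= muln1.
apply: leq_sum => A; rewrite inE => /existsP [x /existsP [y /andP [Gxy /eqP ->]]].
have xy : x != y by apply/negP => /eqP exy; move: Gxy; rewrite exy Girr.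
rewrite (sum1_card [pred z : T * T | G z.1 z.2 && ([set z.1; z.2] == [set x; y])]).
have sub : [set (x, y); (y, x)] \subset [pred z : T * T | G z.1 z.2 && ([set z.1; z.2] == [set x; y])].
  apply/subsetP => z; rewrite !inE => /orP [] /eqP -> /=.
    by rewrite Gxy eqxx.
  by rewrite Gsym Gxy setUC eqxx.
apply: leq_trans (subset_leq_card sub).
by rewrite cards2 xpair_eqE (negbTE xy).
Qed.
End Edges.

Lemma card_split (U : finType) (A Q : pred U) :
  (#|[set t | A t && Q t]| + #|[set t | A t && ~~ Q t]| = #|[set t | A t]|)%N.
Proof.
rewrite -(cardsID [set t | Q t] [set t | A t]); congr (_ + _); apply: eq_card => t; by rewrite !inE // andbC.

Qed.

Lemma sum_cover (R : numDomainType) (I J : finType) (P : pred I) (Q : J -> pred I)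
  (f : I -> R) : (forall i, 0 <= f i) -> (forall i, P i -> exists j, Q j i) ->
  \sum_(i | P i) f i <= \sum_(j : J) \sum_(i | Q j i) f i.
Proof.
move=> f0 cov.
under [X in _ <= X]eq_bigr do rewrite big_mkcond /=.
rewrite exchange_big /= big_mkcond /=; apply: ler_sum => i _.
case Pi: (P i); last by apply: sumr_ge0 => j _; case: (Q j i).
have [j Qj] := cov i Pi; rewrite (bigD1 j) //= Qj lerDl.
by apply: sumr_ge0 => j' _; case: (Q j' i).
Qed.

Lemma exp_le_self (R : numDomainType) (x : R) m : 0 <= x -> x <= 1 -> (0 < m)%N -> x ^+ m <= x.
Proof.
move=> x0 x1; case: m => // m _; rewrite exprS; apply: ler_piMr => //.
exact: exprn_ile1.
Qed.


Definition Fc (R : realType) (beta : R) (h : nat) (x : R) : R :=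
  x * beta * (x / 2) ^+ h / (2 * (h.+1)%:R).
Definition tt (R : realType) (beta : R) (h : nat) (i : nat) : R :=
  iter (h - i) (Fc beta h) beta.

Section Consts.
Variables (R : realType) (beta : R) (h : nat).
Hypothesis b0 : 0 < beta.
Hypothesis b1 : beta < 1.

Lemma Fc_pos x : 0 < x -> 0 < Fc beta h x.
Proof.
move=> x0; rewrite /Fc divr_gt0 // ?mulr_gt0 // ?exprn_gt0 // ?divr_gt0 // ?ltr0n.
Qed.

Lemma Fc_half x : 0 < x -> x <= 1 -> Fc beta h x <= x / 2.
Proof.
move=> x0 x1; rewrite /Fc.
have y1 : beta * (x / 2) ^+ h <= 1.
  have x20 : 0 <= x / 2 by rewrite divr_ge0 // ltW.
  have x21 : x / 2 <= 1 by lra.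
  by have := ler_pM (ltW b0) (exprn_ge0 h x20) (ltW b1) (exprn_ile1 h x20 x21); rewrite mul1r.
have y0 : 0 <= beta * (x / 2) ^+ h.
  by rewrite mulr_ge0 // ?exprn_ge0 // ?divr_ge0 // ltW.
have H1 : 1 <= (h.+1)%:R :> R by rewrite ler1n.
rewrite ler_pdivrMr ?mulr_gt0 ?ltr0n //.
set y := beta * (x / 2) ^+ h in y1 y0.
rewrite -mulrA -/y.
set H := (h.+1)%:R in H1 *.
have -> : x / 2 * (2 * H) = x * H by field.
apply: ler_pM => //; lra.
Qed.

Lemma iter_Fc k x : 0 < x -> x <= 1 -> 0 < iter k (Fc beta h) x <= x.
Proof.
move=> x0 x1; elim: k => [|k /andP [IH1 IH2]] /=; first by rewrite x0 lexx.
rewrite Fc_pos //=; apply: le_trans (Fc_half IH1 _) _; first exact: le_trans IH2 x1.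
apply: le_trans IH2; rewrite ler_pdivrMr //; lra.
Qed.

Lemma tt_pos i : 0 < tt beta h i.
Proof. by have /andP[] := iter_Fc (h - i) b0 (ltW b1). Qed.

Lemma tt_le i : tt beta h i <= beta.
Proof. by have /andP[] := iter_Fc (h - i) b0 (ltW b1). Qed.

Lemma ttS i : (i < h)%N -> tt beta h i = Fc beta h (tt beta h i.+1).
Proof. by move=> ih; rewrite /tt -(subnSK ih). Qed.

Lemma tt0_le i : tt beta h 0 <= tt beta h i.
Proof.
case: (leqP i h) => ih; last first.
  have -> : tt beta h i = beta by rewrite /tt (_ : h - i = 0)%N //; apply/eqP; rewrite subn_eq0 ltnW.
  exact: tt_le.
rewrite /tt subn0 -{1}(subnKC ih) iterD.
have /andP[] := iter_Fc (h - i) b0 (ltW b1) => t0 t1.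
by have /andP[] := iter_Fc i t0 (le_trans t1 (ltW b1)).
Qed.

Lemma tt_step i : (i < h)%N ->
  tt beta h i.+1 / 2 + (h.+1)%:R * (tt beta h i / (beta * (tt beta h i.+1 / 2) ^+ h))
  = tt beta h i.+1.
Proof.
move=> ih; rewrite (ttS ih) /Fc.
have t0 := tt_pos i.+1.
field; rewrite ?expf_neq0 ?mulf_neq0 ?lt0r_neq0 ?divr_gt0 //.
  by have := ler0n R h; lra.
by rewrite invr_gt0.
Qed.
End Consts.

Section Main.
Variables (T : finType) (G : rel T) (R : realType) (alpha beta : R) (h : nat).
Hypothesis Gsym : symmetric G.
Hypothesis Girr : irreflexive G.
Hypothesis n0 : (0 < #|T|)%N.
Hypothesis p0 : 0 < density G R.
Hypothesis b0 : 0 < beta.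
Hypothesis b1 : beta < 1.

Local Notation d S := (#|nbhd G S|%:R : R).
Local Notation p := (density G R).
Local Notation n := (#|T|%:R : R).
Lemma total_lb q : (0 < #|T|)%N ->
  (#|T| ^ q.+2)%:R * density G R ^+ q.+1 <= \sum_(S : q.+1.-tuple T) (#|nbhd G S|%:R : R).
Proof.
move=> _.
set nn : R := #|T|%:R.
have nn0 : 0 < nn by rewrite ltr0n.
rewrite -natr_sum (sum_nbhd Gsym) natr_sum.
under eq_bigr do rewrite natrX.
set X := \sum_v _.
have pm := @power_mean R T (fun v => (#|nbhd G [:: v]|%:R : R)) q (fun v => ler0n _ _).
rewrite -/nn -/X in pm.
have e2 : ((2 * nedges G)%:R : R) ^+ q.+1 <= nn ^+ q * X.
  apply: le_trans pm; apply: lerXn2r; rewrite ?nnegrE ?ler0n ?sumr_ge0 //.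
  by rewrite -natr_sum ler_nat (sum_deg Gsym Girr).
have key : (#|T| ^ q.+2)%:R * density G R ^+ q.+1 * nn ^+ q = ((2 * nedges G)%:R : R) ^+ q.+1.
  rewrite /density natrX -/nn natrX -/nn expr_div_n -exprM.
  have nq : nn ^+ (2 * q.+1) = nn ^+ q.+2 * nn ^+ q by rewrite -exprD; congr (_ ^+ _); lia.
  rewrite nq; field; apply/andP; split; apply: expf_neq0; exact: lt0r_neq0.
rewrite -(ler_pM2r (exprn_gt0 q nn0)) key mulrC; exact: e2.
Qed.
Definition PP (j m : nat) : R := p ^+ (j * m) * n ^+ (j + m).

Lemma n0' : 0 < n. Proof. by rewrite ltr0n. Qed.

Lemma PP_ge0 j m : 0 <= PP j m.
Proof. by rewrite /PP mulr_ge0 // exprn_ge0 // ?ltW // n0'. Qed.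

Lemma sum_le_const j (Pr : pred (j.-tuple T)) (f : j.-tuple T -> R) c :
  (forall S, Pr S -> f S <= c) -> 0 <= c -> \sum_(S | Pr S) f S <= n ^+ j * c.
Proof.
move=> H c0; apply: le_trans (ler_sum _ H) _.
rewrite big_mkcond /=; apply: (le_trans (_ : _ <= \sum_(S : j.-tuple T) c)).
  by apply: ler_sum => S _; case: (Pr S).
by rewrite sumr_const (_ : #|_| = #|T| ^ j)%N ?card_tuple // -natrX mulr_natl.
Qed.

Lemma base j m : 0 <= alpha -> alpha <= 1 -> (0 < m)%N ->
  \sum_(S : j.-tuple T | ~~ good G alpha beta h 0 S) d S ^+ m <= alpha * PP j m.
Proof.
move=> a0 a1 m0.
have H1 : \sum_(S : j.-tuple T | ~~ good G alpha beta h 0 S) d S ^+ m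
    <= n ^+ j * (alpha * p ^+ j * n) ^+ m.
  apply: sum_le_const.
    move=> S; rewrite /= /good0 -ltNge size_tuple => lt.
    apply: (lerXn2r m); rewrite ?nnegrE ?ler0n ?(ltW lt) //; exact: le_trans (ltW lt).
  by rewrite exprn_ge0 // !mulr_ge0 // ?exprn_ge0 // ltW // n0'.
apply: le_trans H1 _.
have E : forall a b c : R, c ^+ j * (a * b ^+ j * c) ^+ m = a ^+ m * (b ^+ (j * m) * c ^+ (j + m)).
  by move=> a b c; rewrite !exprMn -exprM exprD; ring.
rewrite /PP E.
by apply: ler_wpM2r; [exact: PP_ge0 | exact: exp_le_self].
Qed.


Lemma per_k i' eps gam j m (k : 'I_h.+1) :
  0 <= eps -> 0 < gam -> gam <= 1 -> (1 <= m <= j)%N ->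
  (forall j' m', (1 <= m' <= j')%N -> (j' <= h)%N ->
     \sum_(S : j'.-tuple T | ~~ good G alpha beta h i' S) d S ^+ m' <= eps * PP j' m') ->
  \sum_(S : j.-tuple T | [&& (size S <= k)%N,
        ~~ ((1 - beta) * (#|nbhd G S| ^ k)%:R <=
            #|[set t : k.-tuple T | all (fun u => u \in nbhd G S) t
                                    && good G alpha beta h i' t]|%:R)
        & gam * p ^+ j * n <= d S]) d S ^+ m
  <= eps / (beta * gam ^+ h) * PP j m.
Proof.
move=> e0 g0 g1 /andP[m1 mj] IH.
have cpos : 0 < beta * gam ^+ h by rewrite mulr_gt0 // exprn_gt0.
case: (leqP j k) => jk; last first.
  rewrite big_pred0; first by rewrite mulr_ge0 ?PP_ge0 // divr_ge0 // ltW.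
  by move=> S; rewrite size_tuple leqNgt jk.
have kh : (k <= h)%N by rewrite -ltnS.
have mk : (m <= k)%N by apply: leq_trans jk.
set Qf := (p ^+ j * n) ^+ (k - m).
have Qpos : 0 < Qf by rewrite exprn_gt0 // mulr_gt0 // ?exprn_gt0 // n0'.
have PPK : PP k j = Qf * PP j m.
  rewrite /PP /Qf [(p ^+ j * n) ^+ _]exprMn -exprM mulrACA -!exprD.
  congr (_ ^+ _ * _ ^+ _); nia.
set a := gam * p ^+ j * n.
have H : beta * gam ^+ h * Qf *
   (\sum_(S : j.-tuple T | [&& (size S <= k)%N,
        ~~ ((1 - beta) * (#|nbhd G S| ^ k)%:R <=
            #|[set t : k.-tuple T | all (fun u => u \in nbhd G S) t
                                    && good G alpha beta h i' t]|%:R)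
        & a <= d S]) d S ^+ m) <= eps * PP k j.
  rewrite mulr_sumr.
  apply: (le_trans (_ : _ <= \sum_(S : j.-tuple T)
     (#|[set t : k.-tuple T | all (fun u => u \in nbhd G S) t
            && ~~ good G alpha beta h i' t]|%:R : R))); last first.
    rewrite -natr_sum (double_count Gsym) natr_sum.
    under eq_bigr do rewrite natrX.
    by apply: IH; rewrite ?jk ?(leq_trans m1 mj).
  rewrite [X in X <= _]big_mkcond /=; apply: ler_sum => S _.
  case: ifP => //= /and3P [_ nk aS].
  have sp := card_split (fun t : k.-tuple T => all (fun u => u \in nbhd G S) t)
                        (good G alpha beta h i').
  rewrite card_tuples_in in sp.
  have spR : (#|[set t : k.-tuple T | all (fun u => u \in nbhd G S) t
                                    && good G alpha beta h i' t]|%:R : R)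
           + #|[set t : k.-tuple T | all (fun u => u \in nbhd G S) t
                                    && ~~ good G alpha beta h i' t]|%:R
           = d S ^+ k by rewrite -natrD sp natrX.
  rewrite -ltNge natrX in nk.
  have dpow : gam ^+ h * Qf * d S ^+ m <= d S ^+ k.
    have d0 : 0 <= d S by [].
    apply: (le_trans (_ : _ <= a ^+ (k - m) * d S ^+ m)).
      apply: ler_wpM2r; first by rewrite exprn_ge0.
      rewrite /a /Qf -mulrA [(gam * _) ^+ _]exprMn; apply: ler_wpM2r.
        by rewrite exprn_ge0 // mulr_ge0 // ?exprn_ge0 // ltW // n0'.
      apply: ler_wiXn2l; [exact: ltW | exact: g1 | exact: leq_trans (leq_subr m k) kh].
    rewrite -{2}(subnKC mk) exprD mulrC; apply: ler_wpM2l; first by rewrite exprn_ge0.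
    apply: (lerXn2r (k - m)); rewrite ?nnegrE //.
    by rewrite /a !mulr_ge0 // ?exprn_ge0 // ltW // n0'.
  rewrite -!mulrA; apply: (le_trans (_ : _ <= beta * d S ^+ k)).
    by apply: ler_wpM2l; [exact: ltW | rewrite !mulrA].
  set g := (#|[set t : k.-tuple T | _ && good G alpha beta h i' t]|%:R : R) in spR nk.
  set b := (#|[set t : k.-tuple T | _ && ~~ good G alpha beta h i' t]|%:R : R) in spR *.
  set D := d S ^+ k in spR nk *.
  lra.
rewrite PPK in H.
rewrite -(ler_pM2l (mulr_gt0 cpos Qpos)).
have -> : beta * gam ^+ h * Qf * (eps / (beta * gam ^+ h) * PP j m) = eps * (Qf * PP j m).
  by field; rewrite expf_neq0 ?lt0r_neq0.
exact: H.
Qed.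

Lemma step i' eps gam : 0 <= eps -> 0 < gam -> gam <= 1 -> alpha <= gam ->
  (forall j' m', (1 <= m' <= j')%N -> (j' <= h)%N ->
     \sum_(S : j'.-tuple T | ~~ good G alpha beta h i' S) d S ^+ m' <= eps * PP j' m') ->
  forall j m, (1 <= m <= j)%N -> (j <= h)%N ->
  \sum_(S : j.-tuple T | ~~ good G alpha beta h i'.+1 S) d S ^+ m
    <= (gam + (h.+1)%:R * (eps / (beta * gam ^+ h))) * PP j m.
Proof.
move=> e0 g0 g1 ag IH j m mjm jh.
have /andP[m1 mj] := mjm.
rewrite (bigID (fun S : j.-tuple T => d S < gam * p ^+ j * n)) /= mulrDl.
apply: lerD.
  have E : forall a b c : R, c ^+ j * (a * b ^+ j * c) ^+ m
     = a ^+ m * (b ^+ (j * m) * c ^+ (j + m)).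
    by move=> a b c; rewrite !exprMn -exprM exprD; ring.
  apply: (le_trans (_ : _ <= n ^+ j * (gam * p ^+ j * n) ^+ m)).
    apply: sum_le_const.
      move=> S /andP [_ lt].
      apply: (lerXn2r m); rewrite ?nnegrE ?ler0n ?(ltW lt) //.
      exact: le_trans (ltW lt).
    by rewrite exprn_ge0 // !mulr_ge0 // ?exprn_ge0 // ltW // n0'.
  rewrite E; apply: ler_wpM2r; first exact: PP_ge0.
  exact: exp_le_self (ltW g0) g1 m1.
apply: le_trans (sum_cover (Q := fun (k : 'I_h.+1) (S : j.-tuple T) =>
   [&& (size S <= k)%N,
        ~~ ((1 - beta) * (#|nbhd G S| ^ k)%:R <=
            #|[set t : k.-tuple T | all (fun u => u \in nbhd G S) t
                                    && good G alpha beta h i' t]|%:R)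
        & gam * p ^+ j * n <= d S]) _ _) _.
- by move=> S; rewrite exprn_ge0.
- move=> S /andP [ng nlt]; rewrite -leNgt in nlt.
  have g0S : alpha * p ^+ j * n <= d S.
    apply: le_trans nlt; apply: ler_wpM2r; first by rewrite ltW // n0'.
    by apply: ler_wpM2r; rewrite // exprn_ge0 // ltW.
  move: ng; rewrite /= size_tuple jh /good0 size_tuple g0S /=.
  rewrite negb_forall => /existsP [k]; rewrite negb_imply => /andP [sk nk].
  by exists k; rewrite sk nk nlt.
apply: le_trans (ler_sum _ (fun k _ => @per_k i' eps gam j m k e0 g0 g1 mjm IH)) _.
rewrite sumr_const (_ : #|_| = h.+1); last by rewrite card_ord.
by rewrite mulr_natl mulrnAl.
Qed.

Hypothesis Hal : alpha = tt beta h 0.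

Lemma bad_bound i : (i <= h)%N -> forall j m, (1 <= m <= j)%N -> (j <= h)%N ->
  \sum_(S : j.-tuple T | ~~ good G alpha beta h i S) d S ^+ m <= tt beta h i * PP j m.
Proof.
elim: i => [|i IH] hi j m mjm jh.
  have /andP [m1 _] := mjm.
  rewrite -Hal; apply: base => //; rewrite Hal.
    exact: ltW (tt_pos h b0 b1 _).
  exact: le_trans (tt_le h b0 b1 0) (ltW b1).
have t0 := tt_pos h b0 b1 i.+1.
have t1 : tt beta h i.+1 <= 1 := le_trans (tt_le h b0 b1 _) (ltW b1).
apply: le_trans (@step i (tt beta h i) (tt beta h i.+1 / 2) _ _ _ _
   (IH (ltnW hi)) j m mjm jh) _.
- exact: ltW (tt_pos h b0 b1 _).
- by rewrite divr_gt0.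
- lra.
- rewrite Hal; apply: le_trans (tt0_le h b0 b1 i) _.
  rewrite (ttS beta hi); apply: Fc_half => //.
by rewrite tt_step.
Qed.

Lemma part1 i j : (1 <= i <= h)%N -> (1 <= j <= h)%N ->
  (1 - beta) * (#|T| ^ j.+1)%:R * p ^+ j
     <= \sum_(S : j.-tuple T | good G alpha beta h i S) d S.
Proof.
move=> /andP [i1 ih] /andP [j1 jh].
have j1' : (1 <= 1 <= j)%N by rewrite j1.
have bb := bad_bound ih j1' jh.
have bb' : \sum_(S : j.-tuple T | ~~ good G alpha beta h i S) d S <= beta * (p ^+ j * n ^+ j.+1).
  apply: (@le_trans _ _ (tt beta h i * PP j 1)).
    by apply: le_trans bb; apply: ler_sum => S _; rewrite expr1.
  rewrite /PP muln1 addn1; apply: ler_wpM2r; last exact: tt_le.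
  by rewrite mulr_ge0 // exprn_ge0 // ltW // n0'.
clear j1'; case: j j1 jh bb bb' => // q _ qh bb bb'.
have tl := total_lb q n0.
rewrite (bigID (fun S : q.+1.-tuple T => good G alpha beta h i S)) /= in tl.
rewrite natrX in tl *.
lra.
Qed.
End Main.

Theorem theorem3p3 (R : realType) (h : nat) (beta : R) :
  (0 < h)%N -> 0 < beta -> beta < 1 ->
  exists2 alpha : R, 0 < alpha &
    forall (T : finType) (G : rel T),
      symmetric G -> irreflexive G ->
      forall i j : nat, (1 <= i <= h)%N -> (1 <= j <= h)%N ->
        ((1 - beta) * (#|T| ^ j.+1)%:R * density G R ^+ j
           <= \sum_(S : j.-tuple T | good G alpha beta h i S)
                (#|nbhd G S|%:R : R))
        /\ ((0 < #|T|)%N ->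
            exists S : seq T, [/\ size S = j, good G alpha beta h i S &
              (1 - beta) * density G R ^+ j * #|T|%:R <= #|nbhd G S|%:R]).
Proof.
move=> h0 b0 b1.
exists (tt beta h 0); first exact: tt_pos.
move=> T G Gsym Girr i j hi hj.
have /andP [i1 ih] := hi; have /andP [j1 jh] := hj.
set alpha := tt beta h 0.
have sum0 : 0 <= \sum_(S : j.-tuple T | good G alpha beta h i S) (#|nbhd G S|%:R : R).
  exact: sumr_ge0.
have [n0|n0] := posnP #|T|.
  split; last by rewrite n0.
  by rewrite n0 exp0n // mulr0 mul0r.
have pge0 : 0 <= density G R by rewrite /density divr_ge0 // ler0n.
have j0 : j != 0%N by rewrite -lt0n.
case: (boolP (density G R == 0)) => [/eqP pz | pnz].
  split; first by rewrite pz expr0n (negbTE j0) mulr0.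
  move=> _.
  have noedge : forall u v, ~~ G u v.
    move=> u v; apply/negP => Guv.
    have e0 : (0 < nedges G)%N.
      apply/card_gt0P; exists [set u; v]; rewrite /edges inE.
      by apply/existsP; exists u; apply/existsP; exists v; rewrite Guv eqxx.
    move: pz; rewrite /density => /eqP; rewrite mulf_eq0 invr_eq0 !pnatr_eq0.
    by rewrite muln_eq0 expn_eq0 /= (gtn_eqF e0) (gtn_eqF n0).
  case/card_gt0P: n0 => x _.
  have nb0 : #|nbhd G (nseq j x)| = 0%N.
    apply/eqP; rewrite cards_eq0; apply/eqP/setP => v; rewrite !inE.
    by case: (j) j0 => // j' _ /=; rewrite (negbTE (noedge x v)).
  exists (nseq j x); split.
  - exact: size_nseq.
  - case: i i1 {hi ih sum0} => // i' _ /=.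
    rewrite size_nseq jh /good0 size_nseq pz expr0n (negbTE j0) mulr0 mul0r nb0 lexx /=.
    apply/forallP => k; apply/implyP => jk.
    by rewrite exp0n ?(leq_trans j1 jk) // mulr0 ler0n.
  - by rewrite pz expr0n (negbTE j0) mulr0 mul0r ler0n.
have pp : 0 < density G R by rewrite lt_def pnz pge0.
have P1 := part1 Gsym Girr n0 pp b0 b1 (erefl alpha) hi hj.
split; first exact: P1.
move=> _.
set c := (1 - beta) * density G R ^+ j * #|T|%:R.
have cpos : 0 < c by rewrite /c !mulr_gt0 ?exprn_gt0 ?subr_gt0 // ltr0n.
have cE : (#|T|%:R : R) ^+ j * c = (1 - beta) * (#|T| ^ j.+1)%:R * density G R ^+ j.
  by rewrite /c natrX exprS; ring.
case: (boolP [exists S : j.-tuple T, good G alpha beta h i S && (c <= #|nbhd G S|%:R)]).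
  move=> /existsP [S /andP [gS cS]].
  by exists S; split; rewrite ?size_tuple.
rewrite negb_exists => /forallP none.
have lt_all : forall S : j.-tuple T, good G alpha beta h i S -> (#|nbhd G S|%:R : R) < c.
  by move=> S gS; have := none S; rewrite gS /= -ltNge.
case: (boolP [exists S : j.-tuple T, good G alpha beta h i S]).
  move=> /existsP [S0 gS0].
  have L1 : \sum_(S : j.-tuple T | good G alpha beta h i S) (#|nbhd G S|%:R : R)
          < \sum_(S : j.-tuple T | good G alpha beta h i S) c.
    apply: ltr_sum => //; apply/hasP; exists S0 => //; exact: mem_index_enum.
  have L2 : \sum_(S : j.-tuple T | good G alpha beta h i S) c <= (#|T|%:R : R) ^+ j * c.
    by apply: sum_le_const => // ; exact: ltW.
  rewrite cE in L2.
  have := lt_le_trans (le_lt_trans P1 L1) L2.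
  by rewrite ltxx.
rewrite negb_exists => /forallP none2.
move: P1; rewrite big_pred0; last by move=> S; apply/negbTE/none2.
rewrite -cE => H.
have : 0 < (#|T|%:R : R) ^+ j * c by rewrite mulr_gt0 // exprn_gt0 // ltr0n.
by rewrite ltNge H.
Qed.
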